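(* Let $\mathcal A=\{\mathbf p\in[0,1]^4: p_1=1\}$ be the set of agreeable memory-one strategies, with the subspace topology from $\mathbb R^4$. The set $\{\mathbf p\in\mathcal A:\ \mathbf p=(1,1,0,0)\text{ or }\mathbf p\text{ is of Nash type}\}$ is a closed convex set whose interior (relative to $\mathcal A$) is the set of good strategies.
   Context: Iterated Prisoner's Dilemma: payoffs $T>R>P>S$ with $2R>T+S$; outcomes of a round are ordered $cc,cd,dc,dd$ (first letter X's play, second Y's; $c$ = cooperate, $d$ = defect); payoff vectors $\mathbf S_X=(R,S,T,P)$, $\mathbf S_Y=(R,T,S,P)$. A memory-one strategy for X is $\mathbf p=(p_1,p_2,p_3,p_4)\in[0,1]^4$, where $p_i$ is the probability that X plays $c$ in the next round given that the current round had the $i$-th outcome. A strategy pattern for Y is an arbitrary (possibly randomized and history-dependent) rule for Y's play in each round. Given initial plays and the rules used, let $\mathbf v^n$ be the probability distribution of the outcome of round $n$; a limit distribution is any limit point $\mathbf v$ of the Cesàro averages $\frac1n\sum_{k=1}^n\mathbf v^k$, and the associated expected payoffs are $s_X=\langle\mathbf v\cdot\mathbf S_X\rangle$, $s_Y=\langle\mathbf v\cdot\mathbf S_Y\rangle$. $\mathbf p$ is agreeable if $p_1=1$. $\mathbf p$ is of Nash type if it is agreeable and, for every strategy pattern of Y and every associated limit distribution, $s_Y\ge R$ implies $s_Y=R$. $\mathbf p$ is good if it is agreeable and, for every strategy pattern of Y and every associated limit distribution, $s_Y\ge R$ implies $s_Y=s_X=R$. *)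

(* Defs.v *)
From mathcomp Require Import all_boot all_order all_algebra.
From mathcomp Require Import reals.
Set Implicit Arguments. Unset Strict Implicit. Unset Printing Implicit Defensive.
Import Order.TTheory GRing.Theory Num.Theory.
Local Open Scope ring_scope.

(* Outcomes of a round, ordered cc, cd, dc, dd, encoded as 'I_4 = {0,1,2,3}.
   First letter = X's play, second = Y's play. *)
Definition outcome := 'I_4.
Definition xcoop (o : outcome) : bool := (o < 2)%N.
Definition ycoop (o : outcome) : bool := ~~ odd o.

Section IPD.
Variable R : realType.

Definition prplay (b : bool) (x : R) : R := if b then x else 1 - x.

(* A memory-one strategy is a row vector p = (p_1,p_2,p_3,p_4) in [0,1]^4;
   p ord0 i is the probability of playing c after the i-th outcome. *)
Definition is_strategy (p : 'rV[R]_4) : Prop := forall i, 0 <= p ord0 i <= 1.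
Definition agreeable (p : 'rV[R]_4) : Prop :=
  is_strategy p /\ p ord0 (0 : 'I_4) = 1.

(* A strategy pattern for Y: for every finite history (chronological list of
   outcomes of previous rounds) the probability that Y cooperates in the next
   round. *)
Definition strategy_pattern (q : seq outcome -> R) : Prop :=
  forall h, 0 <= q h <= 1.

(* Probability that X cooperates next, given the reversed history rh
   (most recent outcome first); x0 is X's initial cooperation probability. *)
Definition xprob (p : 'rV[R]_4) (x0 : R) (rh : seq outcome) : R :=
  if rh is o :: _ then p ord0 o else x0.

Fixpoint hprob (p : 'rV[R]_4) (x0 : R) (q : seq outcome -> R)
    (rh : seq outcome) : R :=
  if rh is o :: rh' then
    hprob p x0 q rh' * prplay (xcoop o) (xprob p x0 rh')
      * prplay (ycoop o) (q (rev rh'))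
  else 1.

(* v^(n+1): distribution of the outcome of round n+1 (rounds numbered from 1),
   obtained by summing over all histories of the first n rounds. *)
Definition vround (p : 'rV[R]_4) (x0 : R) (q : seq outcome -> R) (n : nat)
    (o : outcome) : R :=
  \sum_(h : n.-tuple outcome) hprob p x0 q (o :: tval h).

(* Cesaro average (1/N) sum_{k=1}^{N} v^k, for N = n+1 *)
Definition cesaro (p : 'rV[R]_4) (x0 : R) (q : seq outcome -> R) (n : nat)
    (o : outcome) : R :=
  (n.+1%:R)^-1 * \sum_(k < n.+1) vround p x0 q k o.

Definition limit_dist (p : 'rV[R]_4) (x0 : R) (q : seq outcome -> R)
    (v : outcome -> R) : Prop :=
  forall eps : R, 0 < eps -> forall N : nat, exists2 n : nat, (N <= n)%N &
    forall o, `|cesaro p x0 q n o - v o| < eps.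

Definition sX (pT pR pP pS : R) (v : outcome -> R) : R :=
  v 0 * pR + v 1 * pS + v 2 * pT + v 3 * pP.
Definition sY (pT pR pP pS : R) (v : outcome -> R) : R :=
  v 0 * pR + v 1 * pT + v 2 * pS + v 3 * pP.

Definition nash_type (pT pR pP pS : R) (p : 'rV[R]_4) : Prop :=
  agreeable p /\
  forall (x0 : R) (q : seq outcome -> R) (v : outcome -> R),
    0 <= x0 <= 1 -> strategy_pattern q -> limit_dist p x0 q v ->
    pR <= sY pT pR pP pS v -> sY pT pR pP pS v = pR.

Definition good (pT pR pP pS : R) (p : 'rV[R]_4) : Prop :=
  agreeable p /\
  forall (x0 : R) (q : seq outcome -> R) (v : outcome -> R),
    0 <= x0 <= 1 -> strategy_pattern q -> limit_dist p x0 q v ->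
    pR <= sY pT pR pP pS v ->
    sY pT pR pP pS v = pR /\ sX pT pR pP pS v = pR.

Definition repeat_strat : 'rV[R]_4 :=
  \row_(i < 4) (if (i < 2)%N then 1 else 0).

Definition nash_set (pT pR pP pS : R) (p : 'rV[R]_4) : Prop :=
  agreeable p /\ (p = repeat_strat \/ nash_type pT pR pP pS p).

(* sup-distance on R^4 (induces the Euclidean topology) *)
Definition dist4 (p q : 'rV[R]_4) : R := \big[Num.max/0]_(i < 4) `|p ord0 i - q ord0 i|.

Definition rel_closed (Sset : 'rV[R]_4 -> Prop) : Prop :=
  (forall p, Sset p -> agreeable p) /\
  forall p, agreeable p ->
    (forall eps : R, 0 < eps -> exists q, Sset q /\ dist4 p q < eps) ->
    Sset p.

Definition rel_interior (Sset : 'rV[R]_4 -> Prop) (p : 'rV[R]_4) : Prop :=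
  agreeable p /\
  exists2 eps : R, 0 < eps &
    forall q, agreeable q -> dist4 p q < eps -> Sset q.

Definition convex_set (Sset : 'rV[R]_4 -> Prop) : Prop :=
  forall p q (t : R), Sset p -> Sset q -> 0 <= t <= 1 ->
    Sset (t *: p + (1 - t) *: q).

End IPD.

(* Main.v *)
Require Import Defs.
From mathcomp Require Import all_boot all_order all_algebra.
From mathcomp Require Import reals.
From mathcomp Require Import classical_sets boolp ring lra.
Import Order.TTheory GRing.Theory Num.Theory.
Local Open Scope ring_scope.

Set Implicit Arguments. Unset Strict Implicit.
Lemma sum4 (R : nmodType) (F : 'I_4 -> R) :
  \sum_(o < 4) F o = F 0 + F 1 + F 2 + F 3.
Proof.
rewrite !big_ord_recl big_ord0 addr0 !addrA.
by congr (_ + _ + _ + _); congr F; apply/val_inj.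
Qed.
Lemma sum_tuple_cons (R : nmodType) (T : finType) n (F : seq T -> R) :
  \sum_(h : n.+1.-tuple T) F h = \sum_(o : T) \sum_(h : n.-tuple T) F (o :: h).
Proof.
rewrite pair_big /=.
rewrite (reindex (fun t : n.+1.-tuple T => (thead t, [tuple of behead t]))) /=.
  by apply: eq_bigr => t _; rewrite [in LHS](tuple_eta t).
exists (fun x : T * n.-tuple T => [tuple of x.1 :: x.2]).
  by move=> t _; rewrite -tuple_eta.
by case=> o t _ /=; rewrite theadE; congr pair; apply/val_inj.
Qed.



Section Prob.
Variable R : realType.
Variables (p : 'rV[R]_4) (x0 : R) (q : seq outcome -> R).
Hypothesis hp : is_strategy p.
Hypothesis hx0 : 0 <= x0 <= 1.
Hypothesis hq : strategy_pattern q.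

Lemma prplay_ge0 b (x : R) : 0 <= x <= 1 -> 0 <= prplay b x.
Proof. by case: b => /andP[h1 h2] /=; lra. Qed.

Lemma xprob_01 rh : 0 <= xprob p x0 rh <= 1.
Proof. by case: rh => [|o rh] //=; apply: hp. Qed.

Lemma hprob_ge0 rh : 0 <= hprob p x0 q rh.
Proof.
elim: rh => [|o rh IH] /=; first exact: ler01.
by rewrite !mulr_ge0 // prplay_ge0 // ?xprob_01 ?hq.
Qed.

Lemma sum_prplay (a b : R) :
  \sum_(o : outcome) prplay (xcoop o) a * prplay (ycoop o) b = 1.
Proof. rewrite sum4 /=; ring. Qed.

Definition Hsum k := \sum_(h : k.-tuple outcome) hprob p x0 q h.

Lemma Hsum1 k : Hsum k = 1.
Proof.
elim: k => [|k IH].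
  rewrite /Hsum (eq_bigr (fun _ => 1)); last by move=> t _; rewrite tuple0.
  by rewrite sumr_const card_tuple expn0.
rewrite /Hsum sum_tuple_cons exchange_big /= -IH /Hsum; apply: eq_bigr => h _ /=.
under eq_bigr do rewrite -mulrA.
by rewrite -mulr_sumr sum_prplay mulr1.
Qed.

Lemma vsum k : \sum_(o : outcome) vround p x0 q k o = 1.
Proof. by rewrite -(Hsum1 k.+1) /Hsum sum_tuple_cons. Qed.

Lemma vround_ge0 k o : 0 <= vround p x0 q k o.
Proof. by apply: sumr_ge0 => h _; exact: hprob_ge0. Qed.

Lemma vround_le1 k o : vround p x0 q k o <= 1.
Proof.
rewrite -(vsum k) (bigD1 o) //= lerDl; apply: sumr_ge0 => *; exact: vround_ge0.
Qed.

Lemma vround0 o : vround p x0 q 0 o = prplay (xcoop o) x0 * prplay (ycoop o) (q [::]).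
Proof.
rewrite /vround (eq_bigr (fun _ => hprob p x0 q [:: o])); last by move=> t _; rewrite tuple0.
by rewrite sumr_const card_tuple expn0 /= mul1r.
Qed.

Lemma vstep k o' : vround p x0 q k.+1 o' =
  \sum_(o : outcome) \sum_(h : k.-tuple outcome)
     hprob p x0 q (o :: h) * prplay (xcoop o') (p ord0 o)
       * prplay (ycoop o') (q (rev (o :: h))).
Proof. by rewrite /vround (@sum_tuple_cons _ _ _ (fun s => hprob p x0 q (o' :: s))). Qed.

Lemma xstep k : vround p x0 q k.+1 0 + vround p x0 q k.+1 1 =
  \sum_(o : outcome) vround p x0 q k o * p ord0 o.
Proof.
rewrite !vstep -big_split /=; apply: eq_bigr => o _.
rewrite -big_split /= /vround mulr_suml; apply: eq_bigr => h _ /=.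
ring.
Qed.

Definition xa k := vround p x0 q k 0 + vround p x0 q k 1.

Lemma xa01 k : 0 <= xa k <= 1.
Proof.
apply/andP; split; first by rewrite addr_ge0 // vround_ge0.
rewrite -(vsum k) sum4 /xa.
have := vround_ge0 k 2; have := vround_ge0 k 3; lra.
Qed.

Lemma cesaro_ge0 n o : 0 <= cesaro p x0 q n o.
Proof.
by rewrite /cesaro mulr_ge0 // ?invr_ge0 ?ler0n // sumr_ge0 // => *; exact: vround_ge0.
Qed.

Lemma cesaro_sum n : \sum_(o : outcome) cesaro p x0 q n o = 1.
Proof.
rewrite /cesaro -mulr_sumr exchange_big /=.
rewrite (eq_bigr (fun _ => 1)); last by move=> k _; exact: vsum.
by rewrite sumr_const card_ord mulVf // pnatr_eq0.
Qed.

Lemma cesaro_rel n :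
  `| \sum_(o : outcome) cesaro p x0 q n o * (p ord0 o - (xcoop o)%:R) |
     <= (n.+1%:R)^-1.
Proof.
have -> : \sum_(o : outcome) cesaro p x0 q n o * (p ord0 o - (xcoop o)%:R) =
   (n.+1%:R)^-1 * (xa n.+1 - xa 0).
  rewrite /cesaro.
  under eq_bigr do rewrite -mulrA.
  rewrite -mulr_sumr; congr (_ * _).
  rewrite -(telescope_sumr xa (leq0n n.+1)) big_mkord.
  under eq_bigr do rewrite mulr_suml.
  rewrite exchange_big /=; apply: eq_bigr => k _.
  rewrite /xa xstep sum4 sum4 /=; ring.
rewrite normrM ger0_norm ?invr_ge0 ?ler0n //.
rewrite -[X in _ <= X]mulr1 ler_wpM2l ?invr_ge0 ?ler0n //.
have := xa01 n.+1; have := xa01 0.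
move=> /andP[h1 h2] /andP[h3 h4]; rewrite ler_norml; apply/andP; split; lra.
Qed.

End Prob.
Lemma small_eq0 (R : realType) (x : R) : (forall e, 0 < e -> `|x| <= e) -> x = 0.
Proof.
move=> h; apply/eqP; apply: contraT => nx.
have hx : 0 < `|x| by rewrite normr_gt0.
have := h (`|x| / 2); rewrite divr_gt0 // => /(_ isT); lra.
Qed.

Lemma inv_small (R : realType) (K e : R) : 0 <= K -> 0 < e ->
  exists N : nat, forall n, (N <= n)%N -> K * (n.+1%:R)^-1 <= e.
Proof.
move=> hK he; exists (Num.bound (K / e)) => n hn.
have hb := archi_boundP (divr_ge0 hK (ltW he)).
have hN : (Num.bound (K / e))%:R <= n.+1%:R :> R by rewrite ler_nat; apply: leqW.
set w := n.+1%:R : R in hN *.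
have wpos : 0 < w by rewrite /w ltr0n.
rewrite ler_pdivrMr // -ler_pdivrMl //.
rewrite mulrC; lra.
Qed.

Section Lim.
Variable R : realType.
Variables (p : 'rV[R]_4) (x0 : R) (q : seq outcome -> R) (v : outcome -> R).
Hypothesis hv : limit_dist p x0 q v.

Lemma lim_ge0 o : (forall n, 0 <= cesaro p x0 q n o) -> 0 <= v o.
Proof.
move=> h; rewrite leNgt; apply/negP => hvo.
have hvo' : 0 < - v o by rewrite oppr_gt0.
have [n _ hn] := hv hvo' 0.
have := hn o; have := h n; rewrite ltr_norml => h1 /andP[h2 h3]; lra.
Qed.

Lemma lim_affine (g : outcome -> R) (b K M : R) : 0 <= K ->
  (forall o, `|g o| <= M) ->
  (forall n, `|\sum_(o : outcome) cesaro p x0 q n o * g o - b| <= K * (n.+1%:R)^-1) ->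
  \sum_(o : outcome) v o * g o = b.
Proof.
move=> hK hg hc; apply/eqP; rewrite -subr_eq0; apply/eqP; apply: small_eq0 => e he.
have hM : 0 <= M by apply: le_trans (hg 0); exact: normr_ge0.
have [N hN] := inv_small hK (divr_gt0 he (ltr0n R 2)).
have heps : 0 < e / (8 * (M + 1)) by rewrite divr_gt0 // mulr_gt0 //; lra.
have [n hn hcv] := hv heps N.
have hKn := hN n hn.
have hcn := hc n.
set eps := e / (8 * (M + 1)) in heps hcv.
have epsM : eps * M <= e / 8.
  rewrite /eps mulrAC ler_pdivrMr; last by rewrite mulr_gt0 //; lra.
  rewrite -mulrA; apply: ler_wpM2l; [lra|nra].
have term : forall o, `|(v o - cesaro p x0 q n o) * g o| <= eps * M.
  move=> o; rewrite normrM ler_pM //; first by rewrite -normrN opprB ltW.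
have -> : \sum_o v o * g o - b = \sum_o (v o - cesaro p x0 q n o) * g o
   + (\sum_o cesaro p x0 q n o * g o - b).
  rewrite !sum4 /=; rewrite !mulrBl; lra.
rewrite sum4.
move: (term 0) (term 1) (term 2) (term 3) hcn.
set t0 := (_ * g 0); set t1 := (_ * g 1); set t2 := (_ * g 2); set t3 := (_ * g 3).
set s := (X in `|X| <= K * _).
rewrite !ler_norml => /andP[a0 b0] /andP[a1 b1] /andP[a2 b2] /andP[a3 b3] /andP[a4 b4].
rewrite -/s. have L1 : t0 + t1 + t2 + t3 <= e/2 by lra. have L2 : s <= e/2 := le_trans b4 hKn. have L3 : - (e/2) <= s. apply: le_trans a4. by rewrite lerN2. apply/andP; split; lra.
Qed.

End Lim.

Unset Implicit Arguments.
Lemma forall4 (P : 'I_4 -> Prop) : P 0 -> P 1 -> P 2 -> P 3 -> forall o, P o.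
Proof.
move=> h0 h1 h2 h3 [[|[|[|[|n]]]] hn] //.
- by have -> : Ordinal hn = 0 by apply/val_inj.
- by have -> : Ordinal hn = 1 by apply/val_inj.
- by have -> : Ordinal hn = 2 by apply/val_inj.
- by have -> : Ordinal hn = 3 by apply/val_inj.
Qed.

Section General.
Variable R : realType.
Variables (p : 'rV[R]_4) (x0 : R) (q : seq outcome -> R) (v : outcome -> R).
Hypothesis hp : is_strategy p.
Hypothesis hx0 : 0 <= x0 <= 1.
Hypothesis hq : strategy_pattern q.
Hypothesis hv : limit_dist p x0 q v.

Lemma lim_props :
  [/\ forall o, 0 <= v o, v 0 + v 1 + v 2 + v 3 = 1 &
      v 0 * (p ord0 0 - 1) + v 1 * (p ord0 1 - 1) + v 2 * p ord0 2 + v 3 * p ord0 3 = 0].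
Proof.
split.
- move=> o; apply: (lim_ge0 hv) => n; exact: cesaro_ge0.
- have := @lim_affine R p x0 q v hv (fun _ => 1) 1 0 1 (lexx 0).
  rewrite sum4 !mulr1 => -> //; first by move=> o; rewrite normr1.
  by move=> n; under eq_bigr do rewrite mulr1; rewrite cesaro_sum subrr normr0 mul0r.
- have := @lim_affine R p x0 q v hv (fun o => p ord0 o - (xcoop o)%:R) 0 1 1 ler01.
  rewrite sum4 /= => <-.
  + by rewrite !subr0.
  + move=> o; have := hp o; case: (xcoop o) => /andP[h1 h2] /=;
    rewrite ler_norml; apply/andP; split; lra.
  + by move=> n; rewrite subr0 mul1r; apply: cesaro_rel.
Qed.

End General.

Lemma limit_point (R : realType) (u : nat -> R) :
  (forall n, 0 <= u n <= 1) ->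
  exists l : R, forall eps, 0 < eps -> forall N, exists2 n, (N <= n)%N & `|u n - l| < eps.
Proof.
move=> hu.
pose A := [set x : R | forall N, exists2 n, (N <= n)%N & x <= u n]%classic.
have A0 : A 0 by move=> N; exists N => //; case/andP: (hu N).
have hA : has_sup A.
  split; first by exists 0.
  exists 1 => x Ax; have [n _ h] := Ax 0%N; case/andP: (hu n) => _ h1.
  exact: le_trans h h1.
exists (sup A) => eps e0 N.
have [x Ax hx] := sup_adherent e0 hA.
have nA : ~ A (sup A + eps).
  move=> H; have := sup_upper_bound hA H; lra.
have [N0 hN0] : exists N0, forall n, (N0 <= n)%N -> u n < sup A + eps.
  apply: contrapT => H; apply: nA => N0.
  have /existsNP [n /not_implyP [hn hn']] : ~ (forall n, (N0 <= n)%N -> u n < sup A + eps).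
    by move=> h; apply: H; exists N0.
  by exists n => //; rewrite leNgt; apply/negP.
have [n hn hxn] := Ax (maxn N N0).
exists n; first by apply: leq_trans hn; exact: leq_maxl.
have := hN0 n (leq_trans (leq_maxr _ _) hn).
rewrite ltr_norml => h; apply/andP; split; lra.
Qed.

Section AllD.
Variable R : realType.
Variables (p : 'rV[R]_4).
Hypothesis hp : is_strategy p.
Definition alld : seq outcome -> R := fun _ => 0.

Lemma alld_ok : strategy_pattern alld.
Proof. by move=> h; rewrite /alld lexx ler01. Qed.

Lemma alld_v0 k : vround p 1 alld k 0 = 0.
Proof. by rewrite /vround big1 // => h _ /=; rewrite /alld mulr0. Qed.
Lemma alld_v2 k : vround p 1 alld k 2 = 0.
Proof. by rewrite /vround big1 // => h _ /=; rewrite /alld mulr0. Qed.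

Lemma alld_c0 n : cesaro p 1 alld n 0 = 0.
Proof. by rewrite /cesaro big1 ?mulr0 // => k _; rewrite alld_v0. Qed.
Lemma alld_c2 n : cesaro p 1 alld n 2 = 0.
Proof. by rewrite /cesaro big1 ?mulr0 // => k _; rewrite alld_v2. Qed.

Lemma h01 : 0 <= (1 : R) <= 1.
Proof. by rewrite ler01 lexx. Qed.

Lemma alld_c3 n : cesaro p 1 alld n 3 = 1 - cesaro p 1 alld n 1.
Proof.
have := cesaro_sum p 1 alld n; rewrite sum4 alld_c0 alld_c2; lra.
Qed.

Lemma alld_p2 k : p ord0 1 = 1 -> vround p 1 alld k 1 = 1.
Proof.
move=> h1.
suff : xa p 1 alld k = 1 by rewrite /xa alld_v0 add0r.
elim: k => [|k IH].
  by rewrite /xa !vround0 /= /alld; lra.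
have := xa01 hp h01 alld_ok k.+1.
have -> : xa p 1 alld k.+1 = vround p 1 alld k 1 + vround p 1 alld k 3 * p ord0 3.
  by rewrite /xa xstep sum4 alld_v0 alld_v2 h1; lra.
move: IH; rewrite /xa alld_v0 add0r => ->.
have := vround_ge0 hp h01 alld_ok k 3; have := hp 3.
move=> /andP[a b] c /andP[d e].
have : 0 <= vround p 1 alld k 3 * p ord0 3 by rewrite mulr_ge0.
lra.
Qed.

Lemma alld_witness : exists v, limit_dist p 1 alld v /\ v 0 = 0 /\ v 2 = 0.
Proof.
have hu : forall n, 0 <= cesaro p 1 alld n 1 <= 1.
  move=> n; apply/andP; split; first exact: (cesaro_ge0 hp h01 alld_ok n 1).
  have := cesaro_ge0 hp h01 alld_ok n 3; rewrite alld_c3; lra.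
have [l hl] := limit_point _ _ hu.
exists (fun o : outcome => if o == 1 then l else if o == 3 then 1 - l else 0).
split => //; move=> eps he N.
have [n hn hu'] := hl eps he N.
exists n => //; apply: forall4 => /=.
- by rewrite alld_c0 subrr normr0.
- by [].
- by rewrite alld_c2 subrr normr0.
- by rewrite alld_c3 (_ : 1 - _ - (1 - l) = - (cesaro p 1 alld n 1 - l)) ?normrN //; ring.
Qed.

End AllD.

Section Y2.
Variable R : realType.
Variables (p : 'rV[R]_4).
Hypothesis hp : is_strategy p.
Hypothesis hp1 : p ord0 0 = 1.
Definition y2 : seq outcome -> R := fun h => if last (3 : outcome) h == 0 then 0 else 1.

Lemma y2_ok : strategy_pattern y2.
Proof. by move=> h; rewrite /y2; case: ifP => _; rewrite ?lexx ?ler01. Qed.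

Lemma y2_last o h : y2 (rev (o :: h)) = if o == 0 then 0 else 1.
Proof. by rewrite /y2 rev_cons last_rcons. Qed.

Lemma y2_h3 h : hprob p 1 y2 (3 :: h) = 0.
Proof.
case: h => [|o h] /=; first by rewrite /y2 /= subrr !mulr0.
rewrite y2_last; case: eqP => [->|_]; first by rewrite hp1 subrr mulr0 mul0r.
by rewrite subrr mulr0.
Qed.

Lemma y2_v3 k : vround p 1 y2 k 3 = 0.
Proof. by rewrite /vround big1 // => h _; exact: y2_h3. Qed.

Lemma y2_c3 n : cesaro p 1 y2 n 3 = 0.
Proof. by rewrite /cesaro big1 ?mulr0 // => k _; rewrite y2_v3. Qed.

Lemma y2_term k (o : outcome) :
  \sum_(h : k.-tuple outcome) hprob p 1 y2 (o :: h) * prplay (xcoop 1) (p ord0 o)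
       * prplay (ycoop 1) (y2 (rev (o :: h))) = if o == 0 then vround p 1 y2 k 0 else 0.
Proof.
case: eqP => [->|/eqP ho].
  by rewrite /vround; apply: eq_bigr => h _; rewrite y2_last /= hp1; ring.
by apply: big1 => h _; rewrite y2_last (negbTE ho) /= subrr mulr0.
Qed.

Lemma y2_v1 k : vround p 1 y2 k.+1 1 = vround p 1 y2 k 0.
Proof. by rewrite vstep sum4 !y2_term /=; ring. Qed.

Lemma y2_v1_0 : vround p 1 y2 0 1 = 0.
Proof. by rewrite vround0 /= /y2 /= subrr mulr0. Qed.

Lemma y2_cdiff n :
  `|cesaro p 1 y2 n 1 - cesaro p 1 y2 n 0 - 0| <= 1 * (n.+1%:R)^-1.
Proof.
rewrite subr0 /cesaro -mulrBr big_ord_recl big_ord_recr /= y2_v1_0 add0r.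
have -> : \sum_(i < n) vround p 1 y2 (bump 0 i) 1 = \sum_(i < n) vround p 1 y2 i 0.
  by apply: eq_bigr => i _; rewrite /bump /= add1n y2_v1.
rewrite (_ : \sum_(i < n) vround p 1 y2 i 0 - _ = - vround p 1 y2 n 0); last first.
  by rewrite opprD addrA subrr add0r.
rewrite normrM normrN mul1r ger0_norm ?invr_ge0 ?ler0n //.
rewrite ger0_norm ?(vround_ge0 hp (h01 R) y2_ok) //.
rewrite -[X in _ <= X]mulr1 ler_wpM2l ?invr_ge0 ?ler0n //.
exact: (vround_le1 hp (h01 R) y2_ok).
Qed.

Lemma y2_witness : exists v, limit_dist p 1 y2 v /\ v 0 = v 1 /\ v 3 = 0.
Proof.
have hu : forall n, 0 <= cesaro p 1 y2 n 0 <= 1.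
  move=> n; apply/andP; split; first exact: (cesaro_ge0 hp (h01 R) y2_ok n 0).
  have := cesaro_sum p 1 y2 n; rewrite sum4.
  have := cesaro_ge0 hp (h01 R) y2_ok n 1; have := cesaro_ge0 hp (h01 R) y2_ok n 2.
  have := cesaro_ge0 hp (h01 R) y2_ok n 3; lra.
have [l hl] := limit_point _ _ hu.
exists (fun o : outcome => if o == 0 then l else if o == 1 then l
          else if o == 2 then 1 - 2 * l else 0).
split => //; move=> eps he N.
have he4 : 0 < eps / 4 by rewrite divr_gt0.
have [N' hN'] := inv_small ler01 he4.
have [n hn hu'] := hl _ he4 (maxn N N').
have hd := y2_cdiff n.
have hK := hN' n (leq_trans (leq_maxr _ _) hn).
exists n; first exact: leq_trans (leq_maxl _ _) hn.
have hsum := cesaro_sum p 1 y2 n; rewrite sum4 y2_c3 in hsum.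
move: hu' hd hK hsum; rewrite subr0.
set a := cesaro p 1 y2 n 0; set b := cesaro p 1 y2 n 1; set c := cesaro p 1 y2 n 2.
set z := 1 * _.
move=> hu' hd hK hsum.
have hd' : `|b - a| <= eps / 4 := le_trans hd hK.
move: hu' hd'; rewrite !ler_norml !ltr_norml => /andP[a1 a2] /andP[b1 b2].
apply: forall4 => /=; rewrite ?y2_c3 ?subrr ?normr0 // ltr_norml -/a -/b -/c; apply/andP; split; lra.
Qed.

End Y2.

Set Implicit Arguments. Unset Strict Implicit.
Lemma dist4P (R : realType) (p q : 'rV[R]_4) (e : R) :
  dist4 p q < e <-> 0 < e /\ forall i, `|p ord0 i - q ord0 i| < e.
Proof.
rewrite /dist4; split.
  by move/bigmax_ltP => [h1 h2]; split => // i; apply: h2.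
by move=> [h1 h2]; apply/bigmax_ltP; split.
Qed.

Section Game.
Variable R : realType.
Variables pT pR pP pS : R.
Hypotheses (hSP : pS < pP) (hPR : pP < pR) (hRT : pR < pT) (h2R : pT + pS < 2 * pR).

Definition f1 (p : 'rV[R]_4) := (pT - pR) * p ord0 2 - (pR - pS) * (1 - p ord0 1).
Definition f2 (p : 'rV[R]_4) := (pT - pR) * p ord0 3 - (pR - pP) * (1 - p ord0 1).

Lemma key_id (p : 'rV[R]_4) (v : outcome -> R) :
  p ord0 0 = 1 -> v 0 + v 1 + v 2 + v 3 = 1 ->
  v 0 * (p ord0 0 - 1) + v 1 * (p ord0 1 - 1) + v 2 * p ord0 2 + v 3 * p ord0 3 = 0 ->
  (1 - p ord0 1) * (sY pT pR pP pS v - pR) = v 2 * f1 p + v 3 * f2 p.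
Proof.
move=> h0 hs hr.
have hv0 : v 0 = 1 - v 1 - v 2 - v 3 by lra.
have E : (1 - p ord0 1) * (sY pT pR pP pS v - pR) - (v 2 * f1 p + v 3 * f2 p) =
  (pR - pT) * (v 0 * (p ord0 0 - 1) + v 1 * (p ord0 1 - 1) + v 2 * p ord0 2 + v 3 * p ord0 3).
  by rewrite /sY /f1 /f2 h0 hv0; ring.
by apply/eqP; rewrite -subr_eq0 E hr mulr0.
Qed.

Lemma suff_nash p : agreeable p -> p ord0 1 < 1 -> f1 p <= 0 -> f2 p <= 0 ->
  nash_type pT pR pP pS p.
Proof.
move=> [hp h0] h1 hf1 hf2; split => // x0 q v hx0 hq hv hge.
have [hpos hs hr] := @lim_props _ _ _ _ _ hp hx0 hq hv.
have K := key_id h0 hs hr.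
have a : v 2 * f1 p <= 0 by rewrite mulr_ge0_le0.
have b : v 3 * f2 p <= 0 by rewrite mulr_ge0_le0.
have c : (1 - p ord0 1) * (sY pT pR pP pS v - pR) <= 0 by rewrite K; lra.
have : sY pT pR pP pS v - pR <= 0 by rewrite -(pmulr_rle0 _ (_ : 0 < 1 - p ord0 1)) //; lra.
lra.
Qed.

Lemma suff_good p : agreeable p -> f1 p < 0 -> f2 p < 0 -> good pT pR pP pS p.
Proof.
move=> [hp h0] hf1 hf2.
have h1 : p ord0 1 < 1.
  rewrite ltNge; apply/negP => h1; have := hp 1; have := hp 2; move: hf1; rewrite /f1.
  move=> hf1 /andP[a b] /andP[c d]. have e : p ord0 1 = 1 by lra.
  move: hf1; rewrite e subrr mulr0 subr0 => hf1.
  have : 0 <= (pT - pR) * p ord0 2 by rewrite mulr_ge0 // subr_ge0 ltW.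
  lra.
split => // x0 q v hx0 hq hv hge.
have [hpos hs hr] := @lim_props _ _ _ _ _ hp hx0 hq hv.
have K := key_id h0 hs hr.
have a : v 2 * f1 p <= 0 by rewrite mulr_ge0_le0 // ltW.
have b : v 3 * f2 p <= 0 by rewrite mulr_ge0_le0 // ltW.
have c : (1 - p ord0 1) * (sY pT pR pP pS v - pR) <= 0 by rewrite K; lra.
have hY : sY pT pR pP pS v - pR <= 0 by rewrite -(pmulr_rle0 _ (_ : 0 < 1 - p ord0 1)) //; lra.
have eY : sY pT pR pP pS v = pR by lra.
split => //.
have : v 2 * f1 p + v 3 * f2 p = 0 by rewrite -K eY subrr mulr0.
move=> hz.
have z2 : v 2 * f1 p = 0 by lra.
have z3 : v 3 * f2 p = 0 by lra.
have v2 : v 2 = 0 by move/eqP: z2; rewrite mulf_eq0 (lt_eqF hf1) orbF => /eqP.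
have v3 : v 3 = 0 by move/eqP: z3; rewrite mulf_eq0 (lt_eqF hf2) orbF => /eqP.
move: hr; rewrite h0 v2 v3 subrr !mul0r mulr0 !addr0 add0r => /eqP.
rewrite mulf_eq0 subr_eq0 (lt_eqF h1) orbF => /eqP v1.
rewrite /sX; have v0 : v 0 = 1 by lra.
by rewrite v0 v1 v2 v3; ring.
Qed.


Definition valid (p : 'rV[R]_4) (x0 : R) q v := [/\ 0 <= x0 <= 1, strategy_pattern q & limit_dist p x0 q v].

Lemma nec1 p : agreeable p -> p ord0 1 = 1 ->
  exists x0 q v, valid p x0 q v /\ sY pT pR pP pS v = pT.
Proof.
move=> [hp h0] h1.
have [v [hv [v0 v2]]] := alld_witness _ _ hp.
exists 1, (alld R), v; split; first by split => //; [exact: h01 | exact: alld_ok].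
have [hpos hs hr] := @lim_props _ _ _ _ _ hp (h01 R) (alld_ok R) hv.
have v1 : v 1 = 1.
  have := @lim_affine R p 1 (alld R) v hv (fun o => (o == 1)%:R) 1 0 1 (lexx 0).
  rewrite sum4 /= !mulr0 mulr1 !addr0 add0r; apply.
    by move=> o; case: (o == 1); rewrite ?normr1 ?normr0 ?ler01.
  move=> n; rewrite sum4 /= !mulr0 mulr1 !addr0 add0r mul0r.
  rewrite /cesaro (eq_bigr (fun _ => 1)); last by move=> k _; rewrite (alld_p2 _ _ hp).
  by rewrite sumr_const card_ord -[_ *+ _]mulr_natr mul1r mulVf ?pnatr_eq0 // subrr normr0.
have v3 : v 3 = 0 by lra.
by rewrite /sY v0 v1 v2 v3; ring.
Qed.

Lemma nec2 p : agreeable p -> p ord0 1 < 1 -> 0 <= f2 p ->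
  exists x0 q v, valid p x0 q v /\
    [/\ pR <= sY pT pR pP pS v, (0 < f2 p -> sY pT pR pP pS v != pR) &
        sX pT pR pP pS v < pR].
Proof.
move=> [hp h0] h1 hf2.
have [v [hv [v0 v2]]] := alld_witness _ _ hp.
exists 1, (alld R), v; split; first by split => //; [exact: h01 | exact: alld_ok].
have [hpos hs hr] := @lim_props _ _ _ _ _ hp (h01 R) (alld_ok R) hv.
have hp3 : 0 < p ord0 3.
  rewrite ltNge; apply/negP => h3.
  have : (pT - pR) * p ord0 3 <= 0 by rewrite mulr_ge0_le0 // subr_ge0 ltW.
  have : 0 < (pR - pP) * (1 - p ord0 1) by rewrite mulr_gt0 // subr_gt0.
  move: hf2; rewrite /f2; lra.
have hv1 : 0 < v 1.
  rewrite lt_def hpos andbT; apply/negP => /eqP e1.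
  move: hr; rewrite v0 v2 e1 h0 !mul0r !add0r => /eqP; rewrite mulf_eq0 (gt_eqF hp3) orbF.
  move=> /eqP e3; move: hs; rewrite v0 v2 e1 e3; lra.
have E : p ord0 3 * (sY pT pR pP pS v - pR * (v 0 + v 1 + v 2 + v 3)) - v 1 * f2 p =
  (pP - pR) * (v 0 * (p ord0 0 - 1) + v 1 * (p ord0 1 - 1) + v 2 * p ord0 2 + v 3 * p ord0 3).
  by rewrite /sY /f2 v0 v2 h0; ring.
rewrite hr mulr0 hs mulr1 in E.
have E' : p ord0 3 * (sY pT pR pP pS v - pR) = v 1 * f2 p by apply/eqP; rewrite -subr_eq0 E.
have hY : 0 <= sY pT pR pP pS v - pR.
  by rewrite -(pmulr_rge0 _ hp3) E' mulr_ge0 // ltW.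
split; first lra.
  move=> hf; have : 0 < sY pT pR pP pS v - pR.
    by rewrite -(pmulr_rgt0 _ hp3) E' mulr_gt0.
  by move=> h; apply/negP => /eqP e; move: h; rewrite e subrr ltxx.
have E2 : sX pT pR pP pS v - pR = v 1 * (pS - pR) + v 3 * (pP - pR).
  rewrite -{2}(mulr1 pR) -hs /sX v0 v2; ring.
have a : v 1 * (pS - pR) < 0 by rewrite pmulr_rlt0 // subr_lt0 (lt_trans hSP hPR).
have b : v 3 * (pP - pR) <= 0 by rewrite mulr_ge0_le0 // subr_le0 ltW.
lra.
Qed.

Lemma nec3 p : agreeable p -> p ord0 1 < 1 -> 0 <= f1 p ->
  exists x0 q v, valid p x0 q v /\
    [/\ pR <= sY pT pR pP pS v, (0 < f1 p -> sY pT pR pP pS v != pR) &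
        (sY pT pR pP pS v = pR -> sX pT pR pP pS v < pR)].
Proof.
move=> [hp h0] h1 hf1.
have [v [hv [v01 v3]]] := y2_witness _ _ hp h0.
exists 1, (y2 R), v; split; first by split => //; [exact: h01 | exact: y2_ok].
have [hpos hs hr] := @lim_props _ _ _ _ _ hp (h01 R) (y2_ok R) hv.
have hp2 : 0 < p ord0 2.
  rewrite ltNge; apply/negP => h3.
  have : (pT - pR) * p ord0 2 <= 0 by rewrite mulr_ge0_le0 // subr_ge0 ltW.
  have : 0 < (pR - pS) * (1 - p ord0 1) by rewrite mulr_gt0 // subr_gt0 // (lt_trans hSP hPR).
  move: hf1; rewrite /f1; lra.
have hv1 : 0 < v 1.
  rewrite lt_def hpos andbT; apply/negP => /eqP e1.
  move: hr; rewrite v3 e1 h0 subrr !mul0r !mulr0 !add0r addr0 => /eqP.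
  rewrite mulf_eq0 (gt_eqF hp2) orbF.
  move=> /eqP e2; move: hs; rewrite v01 v3 e1 e2; lra.
have E : p ord0 2 * (sY pT pR pP pS v - pR * (v 0 + v 1 + v 2 + v 3)) - v 1 * f1 p =
  (pS - pR) * (v 0 * (p ord0 0 - 1) + v 1 * (p ord0 1 - 1) + v 2 * p ord0 2 + v 3 * p ord0 3).
  by rewrite /sY /f1 v01 v3 h0; ring.
rewrite hr mulr0 hs mulr1 in E.
have E' : p ord0 2 * (sY pT pR pP pS v - pR) = v 1 * f1 p by apply/eqP; rewrite -subr_eq0 E.
have hY : 0 <= sY pT pR pP pS v - pR.
  by rewrite -(pmulr_rge0 _ hp2) E' mulr_ge0 // ltW.
split; first lra.
  move=> hf; have : 0 < sY pT pR pP pS v - pR.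
    by rewrite -(pmulr_rgt0 _ hp2) E' mulr_gt0.
  by move=> h; apply/negP => /eqP e; move: h; rewrite e subrr ltxx.
move=> eY.
have E2 : sX pT pR pP pS v + sY pT pR pP pS v - 2 * pR * (v 0 + v 1 + v 2 + v 3) =
   (v 1 + v 2) * (pT + pS - 2 * pR).
  rewrite /sX /sY v01 v3; ring.
rewrite hs mulr1 in E2.
have a : (v 1 + v 2) * (pT + pS - 2 * pR) < 0.
  by rewrite pmulr_rlt0 ?subr_lt0 //; have := hpos 2; lra.
lra.
Qed.


Lemma nash_iff p : nash_set pT pR pP pS p <-> agreeable p /\ f1 p <= 0 /\ f2 p <= 0.
Proof.
split.
- move=> [ha [e | hn]].
    subst p; split; first exact: ha. rewrite /f1 /f2 /repeat_strat !mxE /= subrr !mulr0 subr0; split; exact: lexx.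
  split => //.
  have [hp h0] := ha.
  have := hp 1 => /andP[_]; rewrite le_eqVlt => /orP[/eqP e1 | h1].
    have [x0 [q [v [[hx0 hq hv] eY]]]] := nec1 ha e1.
    have := (hn.2 x0 q v hx0 hq hv); rewrite eY => /(_ (ltW hRT)) e.
    by move: hRT; rewrite e ltxx.
  split.
    rewrite leNgt; apply/negP => hf.
    have [x0 [q [v [[hx0 hq hv] [hY hne _]]]]] := nec3 ha h1 (ltW hf).
    by move/eqP: (hne hf); apply; apply: (hn.2 x0 q v hx0 hq hv).
  rewrite leNgt; apply/negP => hf.
  have [x0 [q [v [[hx0 hq hv] [hY hne _]]]]] := nec2 ha h1 (ltW hf).
  by move/eqP: (hne hf); apply; apply: (hn.2 x0 q v hx0 hq hv).
- move=> [ha [hf1 hf2]]; split => //.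
  have [hp h0] := ha.
  have := hp 1 => /andP[_]; rewrite le_eqVlt => /orP[/eqP e1 | h1].
    left.
    have p2 : p ord0 2 = 0.
      move: hf1; rewrite /f1 e1 subrr mulr0 subr0 => hf1.
      have := hp 2 => /andP[a _].
      have : p ord0 2 <= 0 by rewrite -(pmulr_rle0 _ (_ : 0 < pT - pR)) // subr_gt0.
      lra.
    have p3 : p ord0 3 = 0.
      move: hf2; rewrite /f2 e1 subrr mulr0 subr0 => hf2.
      have := hp 3 => /andP[a _].
      have : p ord0 3 <= 0 by rewrite -(pmulr_rle0 _ (_ : 0 < pT - pR)) // subr_gt0.
      lra.
    by apply/rowP; apply: forall4; rewrite mxE /=.
  by right; apply: suff_nash.
Qed.

Lemma good_iff p : good pT pR pP pS p <-> agreeable p /\ f1 p < 0 /\ f2 p < 0.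
Proof.
split; last by move=> [ha [h1 h2]]; apply: suff_good.
move=> [ha hg]; split => //.
have [hp h0] := ha.
have := hp 1 => /andP[_]; rewrite le_eqVlt => /orP[/eqP e1 | h1].
  have [x0 [q [v [[hx0 hq hv] eY]]]] := nec1 ha e1.
  have := (hg x0 q v hx0 hq hv); rewrite eY => /(_ (ltW hRT)) [e _].
  by move: hRT; rewrite e ltxx.
split.
  rewrite ltNge; apply/negP => hf.
  have [x0 [q [v [[hx0 hq hv] [hY _ hX]]]]] := nec3 ha h1 hf.
  have [eY eX] := hg x0 q v hx0 hq hv hY.
  by have := hX eY; rewrite eX ltxx.
rewrite ltNge; apply/negP => hf.
have [x0 [q [v [[hx0 hq hv] [hY _ hX]]]]] := nec2 ha h1 hf.
have [eY eX] := hg x0 q v hx0 hq hv hY.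
by move: hX; rewrite eX ltxx.
Qed.

Lemma mulbound (a x e : R) : 0 <= a -> `|x| < e -> a * x <= a * e.
Proof. by move=> ha hx; rewrite ler_wpM2l // ltW // (le_lt_trans (ler_norm x)). Qed.

Lemma fbound (p q : 'rV[R]_4) e : (forall i, `|p ord0 i - q ord0 i| < e) ->
  f1 p - f1 q <= (pT - pS) * e /\ f2 p - f2 q <= (pT - pS) * e.
Proof.
move=> h.
have a := mulbound (_ : 0 <= pT - pR) (h 2).
have b := mulbound (_ : 0 <= pR - pS) (h 1).
have c := mulbound (_ : 0 <= pR - pP) (h 1).
have d := mulbound (_ : 0 <= pT - pR) (h 3).
have hRT' : 0 <= pT - pR by rewrite subr_ge0 ltW.
have hRS' : 0 <= pR - pS by rewrite subr_ge0 ltW // (lt_trans hSP hPR).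
have hRP' : 0 <= pR - pP by rewrite subr_ge0 ltW.
have e0 : 0 <= e by apply: le_trans (ltW (h 0)); exact: normr_ge0.
have a' := a hRT'; have b' := b hRS'; have c' := c hRP'; have d' := d hRT'.
have : (pR - pP) * e <= (pR - pS) * e by rewrite ler_wpM2r // lerB // ltW.
rewrite /f1 /f2; split; lra.
Qed.

Lemma eps_for (d : R) : 0 < d -> exists2 e : R, 0 < e & (pT - pS) * e = d / 2.
Proof.
move=> hd; have hTS : 0 < pT - pS.
  by rewrite subr_gt0 (lt_trans hSP (lt_trans hPR hRT)).
exists (d / (2 * (pT - pS))); first by rewrite divr_gt0 // mulr_gt0.
by field; rewrite (gt_eqF hTS).
Qed.

Lemma closed_nash : rel_closed (nash_set pT pR pP pS).
Proof.
split; first by move=> p [].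
move=> p ha hcl; apply/nash_iff; split => //.
split.
  rewrite leNgt; apply/negP => hf.
  have [e he E] := eps_for hf.
  have [q [/nash_iff [_ [hq1 _]] /dist4P [_ hd]]] := hcl e he.
  have [b _] := fbound hd; lra.
rewrite leNgt; apply/negP => hf.
have [e he E] := eps_for hf.
have [q [/nash_iff [_ [_ hq2]] /dist4P [_ hd]]] := hcl e he.
have [_ b] := fbound hd; lra.
Qed.

Lemma convex_nash : convex_set (nash_set pT pR pP pS).
Proof.
move=> p q t /nash_iff [[hp p0] [hp1 hp2]] /nash_iff [[hq q0] [hq1 hq2]] /andP [t0 t1].
have ht : 0 <= 1 - t by rewrite subr_ge0.
apply/nash_iff; split; first split.
- move=> i; rewrite !mxE; have /andP[a b] := hp i; have /andP[c d] := hq i.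
  have e1 : t * p ord0 i <= t by rewrite ler_piMr.
  have e2 : (1 - t) * q ord0 i <= 1 - t by rewrite ler_piMr.
  have e3 : 0 <= t * p ord0 i by rewrite mulr_ge0.
  have e4 : 0 <= (1 - t) * q ord0 i by rewrite mulr_ge0.
  apply/andP; split; lra.
- by rewrite !mxE p0 q0; ring.
have E1 : f1 (t *: p + (1 - t) *: q) = t * f1 p + (1 - t) * f1 q.
  by rewrite /f1 !mxE; ring.
have E2 : f2 (t *: p + (1 - t) *: q) = t * f2 p + (1 - t) * f2 q.
  by rewrite /f2 !mxE; ring.
rewrite E1 E2.
have a : t * f1 p <= 0 by rewrite mulr_ge0_le0.
have b : (1 - t) * f1 q <= 0 by rewrite mulr_ge0_le0.
have c : t * f2 p <= 0 by rewrite mulr_ge0_le0.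
have d : (1 - t) * f2 q <= 0 by rewrite mulr_ge0_le0.
split; lra.
Qed.

Lemma interior_good p :
  rel_interior (nash_set pT pR pP pS) p <-> good pT pR pP pS p.
Proof.
rewrite good_iff; split.
- move=> [ha [eps he hin]].
  have [hp p0] := ha.
  have /nash_iff [_ [hf1 hf2]] : nash_set pT pR pP pS p.
    by apply: hin => //; apply/dist4P; split => // i; rewrite subrr normr0.
  pose c := eps / (eps + 2).
  have hc : c * (eps + 2) = eps by rewrite /c mulfVK // gt_eqF // addr_gt0.
  have c0 : 0 < c by rewrite /c divr_gt0 // addr_gt0.
  have c1 : c < 1 by nra.
  have ce : c < eps by nra.
  pose q := \row_(i < 4) (p ord0 i + c * (1 - p ord0 i)).
  have hqa : agreeable q.
    split; last by rewrite mxE p0 subrr mulr0 addr0.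
    move=> i; rewrite mxE; have /andP[a b] := hp i.
    have e1 : 0 <= c * (1 - p ord0 i) by rewrite mulr_ge0 // ?subr_ge0 // ltW.
    have e2 : 0 <= (1 - c) * (1 - p ord0 i) by rewrite mulr_ge0 // subr_ge0 // ltW.
    apply/andP; split; [lra|]. move: e2; rewrite mulrBl mul1r; lra.
  have hdist : dist4 p q < eps.
    apply/dist4P; split => // i; rewrite mxE.
    have /andP[a b] := hp i.
    have e1 : 0 <= c * (1 - p ord0 i) by rewrite mulr_ge0 // ?subr_ge0 // ltW.
    have e2 : c * (1 - p ord0 i) <= c by nra.
    rewrite (_ : _ - _ = - (c * (1 - p ord0 i))); last by ring.
    rewrite normrN ger0_norm //; exact: le_lt_trans e2 ce.
  have /nash_iff [_ [hq1 hq2]] := hin q hqa hdist.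
  have Q1 : f1 q = f1 p + c * ((pT - pR) * (1 - p ord0 2) + (pR - pS) * (1 - p ord0 1)).
    by rewrite /f1 !mxE; ring.
  have Q2 : f2 q = f2 p + c * ((pT - pR) * (1 - p ord0 3) + (pR - pP) * (1 - p ord0 1)).
    by rewrite /f2 !mxE; ring.
  have hRT' : 0 < pT - pR by rewrite subr_gt0.
  have hRS' : 0 < pR - pS by rewrite subr_gt0 (lt_trans hSP hPR).
  have hRP' : 0 < pR - pP by rewrite subr_gt0.
  have /andP[_ b1] := hp 1; have /andP[a2 b2] := hp 2; have /andP[a3 b3] := hp 3.
  have m1 : 0 <= (pT - pR) * (1 - p ord0 2) by rewrite mulr_ge0 ?(ltW hRT') // subr_ge0.
  have m2 : 0 <= (pR - pS) * (1 - p ord0 1) by rewrite mulr_ge0 ?(ltW hRS') // subr_ge0.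
  have m3 : 0 <= (pT - pR) * (1 - p ord0 3) by rewrite mulr_ge0 ?(ltW hRT') // subr_ge0.
  have m4 : 0 <= (pR - pP) * (1 - p ord0 1) by rewrite mulr_ge0 ?(ltW hRP') // subr_ge0.
  split => //; split.
  + rewrite lt_def hf1 andbT; apply/negP => /eqP e.
    have : (pT - pR) * (1 - p ord0 2) + (pR - pS) * (1 - p ord0 1) <= 0.
      by rewrite -(pmulr_rle0 _ c0); lra.
    move=> hz.
    have z1 : (pT - pR) * (1 - p ord0 2) = 0 by lra.
    have z2 : (pR - pS) * (1 - p ord0 1) = 0 by lra.
    move/eqP: z1; rewrite mulf_eq0 (gt_eqF hRT') /= subr_eq0 => /eqP e2.
    move/eqP: z2; rewrite mulf_eq0 (gt_eqF hRS') /= subr_eq0 => /eqP e1.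
    by move: e; rewrite /f1 -e2 -e1 subrr mulr0 subr0 mulr1 => /eqP; rewrite (lt_eqF hRT').
  + rewrite lt_def hf2 andbT; apply/negP => /eqP e.
    have : (pT - pR) * (1 - p ord0 3) + (pR - pP) * (1 - p ord0 1) <= 0.
      by rewrite -(pmulr_rle0 _ c0); lra.
    move=> hz.
    have z1 : (pT - pR) * (1 - p ord0 3) = 0 by lra.
    have z2 : (pR - pP) * (1 - p ord0 1) = 0 by lra.
    move/eqP: z1; rewrite mulf_eq0 (gt_eqF hRT') /= subr_eq0 => /eqP e2.
    move/eqP: z2; rewrite mulf_eq0 (gt_eqF hRP') /= subr_eq0 => /eqP e1.
    by move: e; rewrite /f2 -e2 -e1 subrr mulr0 subr0 mulr1 => /eqP; rewrite (lt_eqF hRT').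
- move=> [ha [hf1 hf2]]; split => //.
  pose d := Num.min (- f1 p) (- f2 p).
  have d0 : 0 < d by rewrite lt_min !oppr_gt0 hf1 hf2.
  have d1 : d <= - f1 p by rewrite ge_min lexx.
  have d2 : d <= - f2 p by rewrite ge_min lexx orbT.
  have [e he E] := eps_for d0.
  exists e => // q hq /dist4P [_ hd].
  have hd' : forall i, `|q ord0 i - p ord0 i| < e by move=> i; rewrite distrC.
  have [b1 b2] := fbound hd'.
  apply/nash_iff; split => //; split; lra.
Qed.

End Game.

Theorem corollary1p6 (R : realType) (pT pR pP pS : R) :
  pS < pP -> pP < pR -> pR < pT -> pT + pS < 2 * pR ->
  [/\ rel_closed (nash_set pT pR pP pS),
      convex_set (nash_set pT pR pP pS) &
      forall p : 'rV[R]_4,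
        rel_interior (nash_set pT pR pP pS) p <-> good pT pR pP pS p].
Proof.
move=> h1 h2 h3 h4; split.
- by apply: closed_nash.
- by apply: convex_nash.
- by move=> p; apply: interior_good.
Qed.
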